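(* Let $(X,d)$ be a metric space, $\lambda\ge 0$, and $\ell:X\to[0,+\infty)$ a lower semicontinuous function with $\inf_X\ell=0$. Suppose $u$ is a supersolution of $(\mathcal{G}_\lambda)$. Then the function $T^\infty u$ is a solution of $(\mathcal{G}_\lambda)$.
   Context: Global slope: for $u:X\to\mathbb{R}\cup\{+\infty\}$, $G[u](x)=\sup_{y\neq x}\frac{(u(x)-u(y))_+}{d(x,y)}$ if $u(x)<+\infty$, and $G[u](x)=+\infty$ otherwise ($\alpha_+=\max\{\alpha,0\}$). Equation $(\mathcal{G}_\lambda)$: $\lambda u(x)+G[u](x)=\ell(x)$ for all $x\in X$, with $\inf_X u=0$. A subsolution is a function $u:X\to\mathbb{R}\cup\{+\infty\}$ with $\inf_X u=0$ and $\lambda u+G[u]\le\ell$ on $X$; a supersolution is a lower semicontinuous $v:X\to\mathbb{R}\cup\{+\infty\}$ with $\inf_X v=0$ and $\lambda v+G[v]\ge \ell$ on $X$; a solution is a lower semicontinuous function that is both a sub- and a supersolution. For $u:X\to[0,+\infty]$, define $Tu(x)=\inf_{y\in X}\frac{u(y)+\ell(x)d(x,y)}{1+\lambda d(x,y)}$; then $u\ge Tu\ge T^2u\ge\cdots\ge 0$, and $T^\infty u(x):=\lim_{n\to\infty}T^nu(x)$. *)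

(* Defs.v *)
From mathcomp Require Import all_boot all_order all_algebra.
From mathcomp Require Import all_classical all_reals all_analysis.
Set Implicit Arguments. Unset Strict Implicit. Unset Printing Implicit Defensive.
Import Order.TTheory GRing.Theory Num.Theory.
Local Open Scope classical_set_scope.
Local Open Scope ring_scope.
Local Open Scope ereal_scope.

Definition is_metric (R : realType) (X : Type) (d : X -> X -> R) : Prop :=
  [/\ (forall x y, (0 <= d x y)%R),
      (forall x y, d x y = 0%R <-> x = y),
      (forall x y, d x y = d y x) &
      (forall x y z, (d x z <= d x y + d y z)%R)].

Definition lsc_d (R : realType) (X : Type) (d : X -> X -> R) (f : X -> \bar R) : Prop :=
  forall (x : X) (c : R), c%:E < f x ->
    exists2 delta : R, (0 < delta)%R & forall y, (d x y < delta)%R -> c%:E < f y.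

Definition einf_X (R : realType) (X : Type) (f : X -> \bar R) : \bar R :=
  ereal_inf (range f).

(* global slope G[u](x); the sup over y <> x of nonnegative quantities is
   taken with value 0 on the empty family (hence the maxe with 0) *)
Definition gslope (R : realType) (X : Type) (d : X -> X -> R) (u : X -> \bar R) (x : X)
  : \bar R :=
  if u x < +oo then
    maxe 0 (ereal_sup [set maxe (u x - u y) 0 * ((d x y)^-1)%:E | y in [set y | y <> x]])
  else +oo.

Definition subsolution (R : realType) (X : Type) (d : X -> X -> R) (lam : R)
  (l : X -> R) (u : X -> \bar R) : Prop :=
  einf_X u = 0 /\ forall x, lam%:E * u x + gslope d u x <= (l x)%:E.

Definition supersolution (R : realType) (X : Type) (d : X -> X -> R) (lam : R)
  (l : X -> R) (u : X -> \bar R) : Prop :=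
  [/\ lsc_d d u, einf_X u = 0 & forall x, (l x)%:E <= lam%:E * u x + gslope d u x].

Definition solution (R : realType) (X : Type) (d : X -> X -> R) (lam : R)
  (l : X -> R) (u : X -> \bar R) : Prop :=
  lsc_d d u /\ subsolution d lam l u /\ supersolution d lam l u.

Definition Top (R : realType) (X : Type) (d : X -> X -> R) (lam : R)
  (l : X -> R) (u : X -> \bar R) : X -> \bar R :=
  fun x => ereal_inf [set (u y + (l x * d x y)%:E) * ((1 + lam * d x y)^-1)%:E | y in setT].

Definition Tinf (R : realType) (X : Type) (d : X -> X -> R) (lam : R)
  (l : X -> R) (u : X -> \bar R) : X -> \bar R :=
  fun x => limn (fun n : nat => iter n (Top d lam l) u x).

(* Main.v *)
Require Import Defs.
From mathcomp Require Import all_boot all_order all_algebra.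
From mathcomp Require Import all_classical all_reals all_analysis.
From mathcomp Require Import ring lra.
Import Order.TTheory GRing.Theory Num.Theory.
Local Open Scope classical_set_scope.
Local Open Scope ring_scope.
Local Open Scope ereal_scope.

Lemma Top_le (R : realType) (X : Type) (d : X -> X -> R) (lam : R)
  (l : X -> R) (w : X -> \bar R) x :
  is_metric d -> Top d lam l w x <= w x.
Proof.
case=> _ hd _ _; apply: ge_ereal_inf; exists (w x) => //.
exists x => //; have -> : d x x = 0%R by apply/hd.
by rewrite !mulr0 !addr0 invr1 mule1.
Qed.

Lemma Top_ub (R : realType) (X : Type) (d : X -> X -> R) (lam : R)
  (l : X -> R) (w : X -> \bar R) x y :
  Top d lam l w x <= (w y + (l x * d x y)%:E) * ((1 + lam * d x y)^-1)%:E.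
Proof. by apply: ereal_inf_lbound; exists y. Qed.

Lemma Top_ge0 (R : realType) (X : Type) (d : X -> X -> R) (lam : R)
  (l : X -> R) (w : X -> \bar R) x :
  is_metric d -> (0 <= lam)%R -> (forall x, (0 <= l x)%R) ->
  (forall x, 0 <= w x) -> 0 <= Top d lam l w x.
Proof.
case=> d0 _ _ _ lam0 l0 w0; apply: le_ereal_inf_tmp => _ [y _ <-].
apply: mule_ge0; first by apply: adde_ge0; rewrite ?lee_fin ?mulr_ge0.
by rewrite lee_fin invr_ge0; apply: addr_ge0 => //; apply: mulr_ge0.
Qed.

Lemma Tinf_inf (R : realType) (X : Type) (d : X -> X -> R) (lam : R)
  (l : X -> R) (u : X -> \bar R) x :
  is_metric d ->
  Tinf d lam l u x = ereal_inf (range (fun n => iter n (Top d lam l) u x)).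
Proof.
move=> hm; rewrite /Tinf; apply: cvg_lim => //.
apply: ereal_nonincreasing_cvgn; apply/nonincreasing_seqP => n.
by rewrite iterS; apply: Top_le.
Qed.

Theorem theorem3p6 (R : realType) (X : Type) (d : X -> X -> R) (lam : R)
  (l : X -> R) (u : X -> \bar R) :
  is_metric d -> (0 <= lam)%R ->
  (forall x, (0 <= l x)%R) -> lsc_d d (fun x => (l x)%:E) ->
  einf_X (fun x => (l x)%:E) = 0 ->
  supersolution d lam l u ->
  solution d lam l (Tinf d lam l u).
Proof.
move=> hm lam0 l0 lsc_l _ [lsc_u infu superu].
have [d0 d0P dsym dtri] := hm.
set V := fun n x => iter n (Top d lam l) u x.
set v := Tinf d lam l u.
have vE x : v x = ereal_inf (range (V^~ x)) by apply: Tinf_inf.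
have u0 x : 0 <= u x by rewrite -infu; apply: ereal_inf_lbound; exists x.
have V0 n x : 0 <= V n x.
  elim: n x => [|n IH] x; first exact: u0.
  by rewrite /V iterS; apply: Top_ge0.
have VS n x : V n.+1 x <= V n x by rewrite /V iterS; apply: Top_le.
have Vu n x : V n x <= u x.
  elim: n => [|n IH] //; exact: le_trans (VS n x) IH.
have vV n x : v x <= V n x by rewrite vE; apply: ereal_inf_lbound; exists n.
have v0 x : 0 <= v x by rewrite vE; apply: le_ereal_inf_tmp => _ [n _ <-].
have cpos x y : (0 < 1 + lam * d x y)%R.
  by apply: ltr_pwDl => //; apply: mulr_ge0.
have [_ [y0 _ <-] y0lt] : exists2 y, range u y & y < 1.
  by apply: ereal_inf_lt; rewrite /einf_X in infu; rewrite infu.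
have [r0 ur0] : exists r0, u y0 = r0%:E.
  move: (u0 y0) y0lt; case: (u y0) => [r||] //; first by exists r.
have vfin x : v x \is a fin_num.
  rewrite ge0_fin_numE //; apply: (le_lt_trans (vV 1%N x)).
  rewrite /V /=; apply: (le_lt_trans (@Top_ub _ _ d lam l u x y0)).
  by rewrite ur0 -EFinD -EFinM ltry.
set vr := fun x => fine (v x).
have vrE x : v x = (vr x)%:E by rewrite /vr fineK.
have vr0 x : (0 <= vr x)%R by rewrite -lee_fin -vrE.
have key x y : (vr x * (1 + lam * d x y) <= vr y + l x * d x y)%R.
  suff H : forall n, ((vr x * (1 + lam * d x y) - l x * d x y)%:E <= V n y).
    rewrite -lerBlDr -lee_fin -vrE vE; apply: le_ereal_inf_tmp => _ [n _ <-].
    exact: H.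
  move=> n; rewrite EFinB leeBlDr // EFinM -vrE -lee_pdivlMr //.
  apply: (le_trans (vV n.+1 x)); rewrite /V iterS; exact: Top_ub.
have maximal (w : X -> R) : (forall p, (w p)%:E <= u p) ->
    (forall p q, w p * (1 + lam * d p q) <= w q + l p * d p q)%R ->
    forall p, (w p <= vr p)%R.
  move=> wu wsub p; rewrite -lee_fin -vrE vE.
  apply: le_ereal_inf_tmp => _ [n _ <-]; elim: n p => [|n IH] p; first exact: wu.
  rewrite /V iterS; apply: le_ereal_inf_tmp => _ [q _ <-].
  rewrite lee_pdivlMr // -EFinM.
  apply: (le_trans _ (leeD (IH q) (lexx _))); rewrite -EFinD lee_fin; exact: wsub.
have dxx x : d x x = 0%R by apply/d0P.
have lscv : lsc_d d v.
  move=> x c; rewrite vrE lte_fin => cx.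
  exists ((vr x - c) / (l x + 1))%R.
    by apply: divr_gt0; [rewrite subr_gt0 | apply: ltr_pwDr; [|exact: l0]].
  move=> y dy; rewrite vrE lte_fin.
  have l1 : (0 < l x + 1)%R by apply: ltr_pwDr; [|exact: l0].
  move: dy; rewrite ltr_pdivlMr // => dy.
  have := key x y.
  have h1 := mulr_ge0 (vr0 x) (mulr_ge0 lam0 (d0 x y)).
  have h2 : (l x * d x y <= (l x + 1) * d x y)%R.
    by apply: ler_wpM2r; [exact: d0 | lra].
  lra.
have einfv : einf_X v = 0.
  apply: le_anti; apply/andP; split.
    rewrite /einf_X -infu; apply: le_ereal_inf_tmp => _ [y _ <-].
    by apply: ge_ereal_inf; exists (v y); [exists y | exact: (vV 0%N y)].
  by apply: le_ereal_inf_tmp => _ [y _ <-].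
have gsE x : gslope d v x = maxe 0 (ereal_sup [set maxe (v x - v y) 0 * ((d x y)^-1)%:E | y in [set y | y <> x]]).
  by rewrite /gslope vrE ltry.
have dpos x y : y <> x -> (0 < d x y)%R.
  move=> yx; rewrite lt_def d0 andbT; apply/eqP => /d0P h; exact: yx (esym h).
have eltE x y : y <> x -> maxe (v x - v y) 0 * ((d x y)^-1)%:E =
    ((Num.max (vr x - vr y) 0) / d x y)%:E.
  by move=> yx; rewrite !vrE -EFinB -EFin_max -EFinM.
have a0 x : (lam * vr x <= l x)%R.
  have [->|vx] := eqVneq (vr x) 0%R; first by rewrite mulr0.
  have vxp : (0 < vr x)%R by rewrite lt_def vx vr0.
  have : ereal_inf (range v) < (vr x)%:E by rewrite -/(einf_X v) einfv lte_fin.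
  move=> /ereal_inf_lt [_ [y _ <-]]; rewrite vrE lte_fin => vyx.
  have yx : y <> x by move=> yx; move: vyx; rewrite yx ltxx.
  have dp := dpos x y yx; have k := key x y.
  rewrite leNgt; apply/negP => hl.
  have : (0 < (lam * vr x - l x) * d x y)%R by apply: mulr_gt0; lra.
  lra.
split=> //; split; first (split=> // x; rewrite gsE).
  have Hs : ereal_sup [set maxe (v x - v y) 0 * ((d x y)^-1)%:E | y in [set y | y <> x]]
      <= (l x - lam * vr x)%:E.
    apply: ge_ereal_sup => _ [y yx <-]; rewrite eltE // lee_fin.
    rewrite ler_pdivrMr ?dpos // ge_max; apply/andP; split.
      have e : ((l x - lam * vr x) * d x y = l x * d x y - vr x * (lam * d x y))%R by ring.
      rewrite e; have := key x y; rewrite mulrDr mulr1; lra.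
    by apply: mulr_ge0; [have := a0 x; lra | exact: d0].
  have Hm : maxe 0 (ereal_sup [set maxe (v x - v y) 0 * ((d x y)^-1)%:E | y in [set y | y <> x]])
      <= (l x - lam * vr x)%:E.
    by rewrite ge_max Hs andbT lee_fin; have := a0 x; lra.
  rewrite {1}vrE -EFinM; apply: (le_trans (leeD (lexx _) Hm)).
  by rewrite -EFinD lee_fin; lra.
split=> // x.
set S := [set maxe (v x - v y) 0 * ((d x y)^-1)%:E | y in [set y | y <> x]].
have gsx : gslope d v x = maxe 0 (ereal_sup S) by exact: gsE.
rewrite gsx.
have [la|la] := leP (l x) (lam * vr x)%R.
  rewrite {1}vrE -EFinM; apply: (le_trans _ (leeD (lexx _) (_ : 0 <= _))).
    by rewrite adde0 lee_fin.
  by rewrite le_max lexx.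
have [uxv|uxv] := eqVneq (u x) (v x).
  apply: (le_trans (superu x)); rewrite uxv; apply: leeD => //.
  rewrite /gslope uxv vrE ltry -vrE -uxv; apply: le_max2 => //.
  apply: ge_ereal_sup => _ [y yx <-]; apply: le_ereal_sup_tmp.
  exists (maxe (v x - v y) 0 * ((d x y)^-1)%:E); first by exists y.
  apply: lee_wpmul2r; first by rewrite lee_fin invr_ge0 d0.
  apply: le_max2 => //; apply: leeB; first by rewrite le_eqVlt; apply/orP; left; apply/eqP; exact: uxv.
  exact: (vV 0%N y).
have vux : (vr x)%:E < u x by rewrite lt_def -vrE uxv /= (vV 0%N x).
set a := (l x - lam * vr x)%R.
have apos : (0 < a)%R by rewrite /a; lra.
suff Hs : a%:E <= ereal_sup S.
  rewrite {1}vrE -EFinM; apply: (le_trans _ (leeD (lexx _) (_ : a%:E <= _))).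
    by rewrite -EFinD lee_fin /a; lra.
  by rewrite le_max Hs orbT.
have cone : forall b, (0 < b)%R -> (b < a)%R -> exists y, y <> x /\ (b * d x y <= vr x - vr y)%R.
  move=> b b0 ba.
  case: (pselect (exists y, y <> x /\ (b * d x y <= vr x - vr y)%R)) => // Hn.
  exfalso.
  have H y : y <> x -> (vr x - vr y < b * d x y)%R.
    by move=> yx; rewrite ltNge; apply/negP => hy; apply: Hn; exists y.
  set eps := (a - b)%R.
  have eps0 : (0 < eps)%R by rewrite /eps; lra.
  have [d1 d10 H1] := lsc_l x (l x - eps / 2)%R (ltac:(rewrite lte_fin; lra)).
  have [eta [eta0 etau]] : exists eta, (0 < eta)%R /\ (vr x + eta)%:E < u x.
    move: vux (u0 x); case: (u x) => [r||] //.
      rewrite lte_fin => hr _; exists ((r - vr x) / 2)%R; split; first lra.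
      by rewrite lte_fin; lra.
    by move=> _ _; exists 1%R; split; [lra | exact: ltry].
  have [d2 d20 H2] := lsc_u x (vr x + eta)%R etau.
  set del := Num.min d1 d2.
  have del0 : (0 < del)%R by rewrite lt_min d10 d20.
  have del1 : (del <= d1)%R by rewrite ge_min lexx.
  have del2 : (del <= d2)%R by rewrite ge_min lexx orbT.
  have lam1 : (0 < 4 * (lam + 1))%R by lra.
  set h := Num.min eta (Num.min (eps * del / 4)%R (eps / (4 * (lam + 1)))%R).
  have h0 : (0 < h)%R.
    rewrite !lt_min eta0 /=; apply/andP; split.
      by apply: divr_gt0; [apply: mulr_gt0|]; lra.
    by apply: divr_gt0.
  have heta : (h <= eta)%R by rewrite ge_min lexx.
  have hdel : (h <= eps * del / 4)%R by rewrite !ge_min lexx /= orbT.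
  have hlam : (lam * h <= eps / 4)%R.
    have : (h <= eps / (4 * (lam + 1)))%R by rewrite !ge_min lexx /= !orbT.
    rewrite ler_pdivlMr // => hh.
    have : (0 <= lam * h)%R by apply: mulr_ge0 => //; lra.
    nra.
  set b' := (b + eps / 4)%R.
  set cone := fun p => (vr x + h - b' * d x p)%R.
  set w := fun p => Num.max (vr p) (cone p).
  have active p : (vr p < cone p)%R -> (d x p < del)%R.
    move=> hc; case: (pselect (p = x)) => [->|px]; first by rewrite dxx.
    have := H p px.
    move: hc; rewrite /cone /b' => hc hp.
    have : (eps / 4 * d x p < eps / 4 * del)%R by lra.
    by rewrite ltr_pM2l //; lra.
  have wu p : (w p)%:E <= u p.
    rewrite /w /=; have [hc|hc] := leP (cone p) (vr p).
      by rewrite -vrE (vV 0%N p).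
    have dp := active p hc.
    apply: le_trans (ltW (H2 p _)); last lra.
    rewrite lee_fin /cone; have := mulr_ge0 (ltW (_ : 0 < b')%R) (d0 x p).
    by move=> /(_ ltac:(rewrite /b'; lra)); lra.
  have wsub p q : (w p * (1 + lam * d p q) <= w q + l p * d p q)%R.
    have wq1 : (vr q <= w q)%R by rewrite /w /= le_max lexx.
    have wq2 : (cone q <= w q)%R by rewrite /w /= le_max lexx orbT.
    have -> : w p = Num.max (vr p) (cone p) by [].
    have [hc|hc] := leP (cone p) (vr p).
      have := key p q; lra.
    have dp := active p hc.
    have lp : (l x - eps / 2 < l p)%R by rewrite -lte_fin; apply: H1; lra.
    have b'0 : (0 <= b')%R by rewrite /b'; lra.
    have tri : (b' * d x q <= b' * d x p + b' * d p q)%R.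
      by rewrite -mulrDr; apply: ler_wpM2l.
    have cq : (cone p - b' * d p q <= cone q)%R by rewrite /cone; lra.
    have cp : (cone p <= vr x + h)%R.
      by rewrite /cone; have := mulr_ge0 b'0 (d0 x p); lra.
    have lc : (lam * cone p <= lam * (vr x + h))%R by apply: ler_wpM2l.
    have K : (0 <= (l p - lam * cone p - b') * d p q)%R.
      apply: mulr_ge0; last exact: d0.
      have eb : b' = (b + eps / 4)%R by [].
      have ee : eps = (a - b)%R by [].
      have ea : a = (l x - lam * vr x)%R by [].
      move: lc; rewrite mulrDr; lra.
    have e : (cone p * (1 + lam * d p q) = cone p + lam * cone p * d p q)%R by ring.
    have e2 : ((l p - lam * cone p - b') * d p q = l p * d p q - lam * cone p * d p q - b' * d p q)%R by ring.
    rewrite e; move: K; rewrite e2; lra.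
  have := maximal w wu wsub x.
  rewrite /w /cone dxx mulr0 subr0 ge_max => /andP [_]; lra.
have elt b : (0 < b)%R -> (b < a)%R -> b%:E <= ereal_sup S.
  move=> b0 ba; have [y [yx hy]] := cone b b0 ba.
  apply: le_ereal_sup_tmp; exists (maxe (v x - v y) 0 * ((d x y)^-1)%:E); first by exists y.
  rewrite eltE // lee_fin ler_pdivlMr ?dpos // le_max hy //.
rewrite leNgt; apply/negP => sa.
have h2 : (a / 2)%:E <= ereal_sup S by apply: elt; lra.
have sfin : ereal_sup S \is a fin_num.
  rewrite ge0_fin_numE; first exact: lt_trans sa (ltry _).
  by apply: le_trans h2; rewrite lee_fin; lra.
move: sa h2; rewrite -(fineK sfin) !lte_fin !lee_fin => sa h2.
have := elt ((fine (ereal_sup S) + a) / 2)%R; rewrite -(fineK sfin) lee_fin.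
move=> /(_ _ _); lra.
Qed.
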